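(* Let $k\ge1$ and let $B\in\mathfrak{gl}_n(\mathbb C)$ satisfy $B[B,B^*]=-B$, $B^k\neq0$, $B^{k+1}=0$. If $B'=hBh^{-1}$ for some $h\in\mathrm{GL}_n(\mathbb C)$ and $B'$ also satisfies $B'[B',B'^*]=-B'$, then $B'=UBU^{-1}$ for some $U\in\mathrm U(n)$.
   Context: $B^*$ is the conjugate transpose, $[X,Y]=XY-YX$. *)

(* Defs.v *)
From HB Require Import structures.
From mathcomp Require Import all_boot all_order all_algebra.
From mathcomp Require Export complex.
Set Implicit Arguments. Unset Strict Implicit. Unset Printing Implicit Defensive.
Import Order.TTheory GRing.Theory Num.Theory.
Local Open Scope ring_scope.

Definition conjtr (R : rcfType) (n : nat) (B : 'M[R[i]]_n) : 'M[R[i]]_n :=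
  (map_mx Num.conj B)^T.

Definition mxcomm (R : rcfType) (n : nat) (X Y : 'M[R[i]]_n) : 'M[R[i]]_n :=
  X *m Y - Y *m X.

Definition unitary (R : rcfType) (n : nat) (U : 'M[R[i]]_n) : Prop :=
  U *m conjtr U = 1%:M.

(* Main.v *)
Require Import Defs.
From HB Require Import structures.
From mathcomp Require Import all_boot all_order all_algebra.
From mathcomp Require Import complex zify.
Set Implicit Arguments. Unset Strict Implicit. Unset Printing Implicit Defensive.
Import Order.TTheory GRing.Theory Num.Theory.
Local Open Scope ring_scope.

Section Basics.
Variable C : numClosedFieldType.

Definition adj m p (A : 'M[C]_(m, p)) : 'M[C]_(p, m) := (map_mx Num.conj A)^T.

Lemma adjM m p q (A : 'M[C]_(m,p)) (B : 'M_(p,q)) : adj (A *m B) = adj B *m adj A.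
Proof. by rewrite /adj map_mxM trmx_mul. Qed.

Lemma adjK m p (A : 'M[C]_(m,p)) : adj (adj A) = A.
Proof. by apply/matrixP => i j; rewrite !mxE conjCK. Qed.

Lemma adjD m p (A B : 'M[C]_(m,p)) : adj (A + B) = adj A + adj B.
Proof. by apply/matrixP => i j; rewrite !mxE rmorphD. Qed.

Lemma adjN m p (A : 'M[C]_(m,p)) : adj (- A) = - adj A.
Proof. by apply/matrixP => i j; rewrite !mxE rmorphN. Qed.

Lemma adjB m p (A B : 'M[C]_(m,p)) : adj (A - B) = adj A - adj B.
Proof. by rewrite adjD adjN. Qed.

Lemma adj0 m p : adj (0 : 'M[C]_(m,p)) = 0.
Proof. by apply/matrixP => i j; rewrite !mxE rmorph0. Qed.

Lemma adjZ m p a (A : 'M[C]_(m,p)) : adj (a *: A) = Num.conj a *: adj A.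
Proof. by apply/matrixP => i j; rewrite !mxE rmorphM. Qed.

Lemma adj1 m : adj (1%:M : 'M[C]_m) = 1%:M.
Proof. by apply/matrixP => i j; rewrite !mxE eq_sym; case: (_ == _); rewrite ?rmorph1 ?rmorph0. Qed.

Lemma adjX m (A : 'M[C]_m) j : adj (A ^+ j) = (adj A) ^+ j.
Proof.
elim: j => [|j IH]; first by rewrite !expr0; exact: adj1.
by rewrite exprS -mulmxE adjM IH exprSr -mulmxE.
Qed.

Lemma adj_entry m p q (A : 'M[C]_(m,p)) (B : 'M[C]_(q,p)) i j :
  (A *m adj B) i j = (row i A *m adj (row j B)) 0 0.
Proof. by rewrite !mxE; apply: eq_bigr => k _; rewrite !mxE. Qed.

Lemma mul_adj_eq0 m p (A : 'M[C]_(m,p)) : A *m adj A = 0 -> A = 0.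
Proof.
move=> H; apply/matrixP => i j.
have := congr1 (fun X : 'M[C]_m => X i i) H; rewrite !mxE => /eqP.
rewrite psumr_eq0; last by move=> k _; rewrite !mxE mul_conjC_ge0.
move=> /allP /(_ j (mem_index_enum _)); rewrite !mxE mul_conjC_eq0 => /eqP ->.
by rewrite ?mxE.
Qed.

Lemma adj_row0 m p (v : 'rV[C]_p) (A : 'M[C]_(m,p)) :
  (v *m adj A == 0) = [forall i, v *m adj (row i A) == 0].
Proof.
apply/eqP/forallP => [H i|H].
  apply/eqP/matrixP => a b; rewrite !ord1 adj_entry !row_id.
  have E : (v *m adj A) 0 i = 0 by rewrite H mxE.
  by rewrite adj_entry row_id in E; rewrite E mxE.
apply/matrixP => a b; rewrite !ord1 adj_entry row_id.
by rewrite (eqP (H b)) !mxE.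
Qed.

End Basics.

Section Eigen.
Variables (C : numClosedFieldType) (n : nat) (B : 'M[C]_n).
Local Notation M := (B *m adj B).
Hypothesis HMB : M *m B = B *m M + B.

Lemma adjMM : adj M = M.
Proof. by rewrite adjM adjK. Qed.

Lemma HMBs : adj B *m M = M *m adj B + adj B.
Proof.
have := congr1 (@adj _ _ _) HMB.
by rewrite adjD (adjM M B) (adjM B M) adjMM -!mulmxA.
Qed.

Lemma BM_eq : B *m M = M *m B - B.
Proof. by rewrite HMB addrK. Qed.

Lemma eig_down (v : 'rV[C]_n) a : v *m M = a *: v ->
  v *m B *m M = (a - 1) *: (v *m B).
Proof.
move=> Hv; rewrite -mulmxA BM_eq mulmxBr mulmxA Hv -scalemxAl.
by rewrite scalerBl scale1r.
Qed.

Lemma eig_up (v : 'rV[C]_n) a : v *m M = a *: v ->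
  v *m adj B *m M = (a + 1) *: (v *m adj B).
Proof.
move=> Hv; rewrite -mulmxA HMBs mulmxDr mulmxA Hv -scalemxAl.
by rewrite scalerDl scale1r.
Qed.

Lemma norm_down (v : 'rV[C]_n) a : v *m M = a *: v ->
  (v *m B) *m adj (v *m B) = a *: (v *m adj v).
Proof. by move=> Hv; rewrite adjM !mulmxA -(mulmxA v) Hv scalemxAl. Qed.

Lemma eig_orth (v w : 'rV[C]_n) (a b : nat) :
  v *m M = a%:R *: v -> w *m M = b%:R *: w -> a != b -> v *m adj w = 0.
Proof.
move=> Hv Hw ab.
have E : v *m M *m adj w = v *m adj (w *m M) by rewrite (adjM w) adjMM !mulmxA.
rewrite Hv Hw adjZ conjC_nat -scalemxAl -scalemxAr in E.
move/eqP: E; rewrite -subr_eq0 -scalerBl scaler_eq0 subr_eq0 eqr_nat.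
by rewrite (negbTE ab) => /eqP.
Qed.

Lemma eig_ffact (v : 'rV[C]_n) (m : nat) : v *m M = m%:R *: v -> forall j,
  v *m B ^+ j *m M = (m - j)%:R *: (v *m B ^+ j) /\
  (v *m B ^+ j) *m adj (v *m B ^+ j) = (m ^_ j)%:R *: (v *m adj v).
Proof.
move=> Hv; elim=> [|j [IH1 IH2]].
  by rewrite expr0 mulmx1 subn0 ffactn0 scale1r.
have EB : v *m B ^+ j.+1 = v *m B ^+ j *m B by rewrite exprSr -mulmxE mulmxA.
have N2 : (v *m B ^+ j.+1) *m adj (v *m B ^+ j.+1) = (m ^_ j.+1)%:R *: (v *m adj v).
  by rewrite EB (norm_down IH1) IH2 scalerA -natrM mulnC -ffactnSr.
split=> //.
case: (ltnP j m) => jm.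
  rewrite EB (eig_down IH1); congr (_ *: _).
  by rewrite -subnSK // -natr1 addrK.
have Z : v *m B ^+ j.+1 = 0.
  apply: mul_adj_eq0; rewrite N2.
  by rewrite (_ : m ^_ j.+1 = 0)%N ?scale0r // ffact_small // ltnS.
by rewrite Z mul0mx scaler0.
Qed.

Lemma eig_raise (z : 'rV[C]_n) : z *m M = 0 -> forall j,
  z *m adj B ^+ j *m M = j%:R *: (z *m adj B ^+ j).
Proof.
move=> Hz; elim=> [|j IH]; first by rewrite expr0 mulmx1 Hz scale0r.
by rewrite exprSr -mulmxE (mulmxA z) (eig_up IH) -natr1.
Qed.

End Eigen.

Section Chain.
Variables (C : numClosedFieldType) (n : nat) (B : 'M[C]_n).
Local Notation M := (B *m adj B).
Hypothesis HMB : M *m B = B *m M + B.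
Variable S : 'M[C]_n.
Hypothesis SB : (S *m B <= S)%MS.
Hypothesis SBs : (S *m adj B <= S)%MS.

Lemma exprSmx (X : 'M[C]_n) j : X ^+ j.+1 = X ^+ j *m X.
Proof. by rewrite exprSr -mulmxE. Qed.

Lemma stab_pow (X : 'M[C]_n) : (S *m X <= S)%MS -> forall j, (S *m X ^+ j <= S)%MS.
Proof.
move=> SX; elim=> [|j IH]; first by rewrite expr0 mulmx1.
by rewrite exprSr -mulmxE mulmxA (submx_trans (submxMr _ IH)).
Qed.

Lemma vstab_pow (X : 'M[C]_n) (v : 'rV[C]_n) : (S *m X <= S)%MS -> (v <= S)%MS ->
   forall j, (v *m X ^+ j <= S)%MS.
Proof. by move=> SX vS j; exact: submx_trans (submxMr _ vS) (stab_pow SX j). Qed.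

Lemma sub_null m (v : 'M[C]_(m, n)) (X : 'M[C]_n) : (v <= S)%MS -> S *m X = 0 -> v *m X = 0.
Proof. by move=> vS SX; apply/eqP; rewrite -submx0 -SX submxMr. Qed.

Lemma nonneg_11 (x : 'rV[C]_n) : 0 <= (x *m adj x) 0 0.
Proof. by rewrite mxE sumr_ge0 // => k _; rewrite !mxE mul_conjC_ge0. Qed.

Variable mu : nat.
Hypothesis Hne : S *m B ^+ mu != 0.
Hypothesis H0 : S *m B ^+ mu.+1 = 0.

Lemma chain_top : exists x : 'rV[C]_n,
  [/\ (x <= S)%MS, x *m M = mu%:R *: x, x *m adj B = 0 & x *m adj x = 1%:M].
Proof.
have [i Hi] : exists i, row i S *m B ^+ mu != 0.
  apply/existsP; apply: contraNT Hne => /existsPn H.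
  by apply/eqP/row_matrixP => i; rewrite row_mul row0; apply/eqP/negbNE/H.
set y := row i S in Hi; set z := y *m B ^+ mu.
have yS : (y <= S)%MS by exact: row_sub.
have zB : z *m B = 0.
  by rewrite /z -mulmxA -exprSmx (sub_null yS H0).
have zM : z *m M = 0 by rewrite mulmxA zB mul0mx.
set x0 := z *m adj B ^+ mu.
have x0M : x0 *m M = mu%:R *: x0 by exact: eig_raise.
have zS : (z <= S)%MS by exact: vstab_pow.
have x0S : (x0 <= S)%MS by exact: vstab_pow.
have x0Bs : x0 *m adj B = 0.
  set w := x0 *m adj B.
  have wE : w = z *m adj B ^+ mu.+1 by rewrite /w /x0 -mulmxA -exprSmx.
  have wM : w *m M = (mu.+1)%:R *: w by rewrite wE; exact: eig_raise.
  have wS : (w <= S)%MS by rewrite wE; exact: vstab_pow.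
  have [_ ] := eig_ffact HMB wM mu.+1.
  rewrite (sub_null wS H0) mul0mx ffactnn => /esym /eqP.
  rewrite scaler_eq0 pnatr_eq0 (negbTE (lt0n_neq0 (fact_gt0 _))) /= => /eqP; exact: mul_adj_eq0.
have x0y : x0 *m adj y = z *m adj z by rewrite /x0 /z adjM adjX mulmxA.
have x0n0 : x0 != 0.
  apply/eqP => x00; move: x0y; rewrite x00 mul0mx => /esym /mul_adj_eq0 z0.
  by move: Hi; rewrite -/z z0 eqxx.
set c := (x0 *m adj x0) 0 0.
have cE : x0 *m adj x0 = c%:M by exact: mx11_scalar.
have c0 : c != 0.
  apply/eqP => c00; move: x0n0; rewrite (mul_adj_eq0 (_ : x0 *m adj x0 = 0)) ?eqxx //.
  by rewrite cE c00; apply/matrixP => a b; rewrite !mxE mul0rn. 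
have cge : 0 <= c by exact: nonneg_11.
set s := sqrtC c.
have sge : 0 <= s by rewrite sqrtC_ge0.
have s0 : s != 0 by rewrite sqrtC_eq0.
exists (s^-1 *: x0); split.
- exact: scalemx_sub.
- by rewrite -scalemxAl x0M !scalerA mulrC.
- by rewrite -scalemxAl x0Bs scaler0.
- rewrite adjZ -scalemxAl -scalemxAr cE geC0_conj ?invr_ge0 // !scalerA.
  rewrite -scalemx1 scalerA -[RHS]scale1r; congr (_ *: _).
  by rewrite -invfM -expr2 sqrtCK mulVf.
Qed.

End Chain.

Section Single.
Variables (C : numClosedFieldType) (n : nat) (B : 'M[C]_n).
Local Notation M := (B *m adj B).
Hypothesis HMB : M *m B = B *m M + B.
Variables (mu : nat) (x : 'rV[C]_n).
Hypothesis hxM : x *m M = mu%:R *: x.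
Hypothesis hxB : x *m adj B = 0.
Hypothesis hxx : x *m adj x = 1%:M.
Hypothesis hxN : x *m B ^+ mu.+1 = 0.

Definition ech j := x *m B ^+ j.
Definition Cm := \matrix_(i < mu.+1) ech i.

Lemma ech_eig j : ech j *m M = (mu - j)%:R *: ech j.
Proof. by have [] := eig_ffact HMB hxM j. Qed.

Lemma ech_norm j : ech j *m adj (ech j) = (mu ^_ j)%:R *: 1%:M.
Proof. by have [_ ->] := eig_ffact HMB hxM j; rewrite hxx. Qed.

Lemma ech_big j : (mu < j)%N -> ech j = 0.
Proof.
move=> lt; rewrite /ech -(subnK lt) addnC exprD -mulmxE mulmxA.
by rewrite hxN mul0mx.
Qed.

Lemma echS j : ech j *m B = ech j.+1.
Proof. by rewrite /ech -mulmxA -exprSmx. Qed.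

Lemma echD i j : ech i *m B ^+ j = ech (i + j).
Proof. by rewrite /ech -mulmxA mulmxE -exprD. Qed.

Lemma ech0 : ech 0 = x.
Proof. by rewrite /ech expr0 mulmx1. Qed.

Lemma ech_Bs0 : ech 0 *m adj B = 0.
Proof. by rewrite ech0. Qed.

Lemma ech_BsS j : ech j.+1 *m adj B = (mu - j)%:R *: ech j.
Proof. by rewrite -echS -mulmxA ech_eig. Qed.

Lemma ech_orth i j : i != j -> ech i *m adj (ech j) = 0.
Proof.
move=> ij.
case: (ltnP mu i) => [/ech_big -> | hi]; first by rewrite mul0mx.
case: (ltnP mu j) => [/ech_big -> | hj]; first by rewrite adj0 mulmx0.
apply: (eig_orth (ech_eig i) (ech_eig j)).
apply: contra ij => /eqP E; apply/eqP.
by have := congr1 (fun t => mu - t)%N E; rewrite !subKn.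
Qed.

Lemma ech_gram i j : ech i *m adj (ech j) = (if i == j then (mu ^_ i)%:R else 0) *: 1%:M.
Proof.
case: eqP => [->|/eqP ij]; first exact: ech_norm.
by rewrite ech_orth // scale0r.
Qed.

Lemma ech_sub k : (ech k <= Cm)%MS.
Proof.
case: (ltnP mu k) => [/ech_big -> | hk]; first exact: sub0mx.
have -> : ech k = row (inord k) Cm by rewrite rowK inordK.
exact: row_sub.
Qed.

Lemma CmB : (Cm *m B <= Cm)%MS.
Proof.
by apply/row_subP => i; rewrite row_mul rowK echS ech_sub.
Qed.

Lemma CmBs : (Cm *m adj B <= Cm)%MS.
Proof.
apply/row_subP => i; rewrite row_mul rowK.
case: i => [[|i] hi] /=; first by rewrite ech_Bs0 sub0mx.
by rewrite ech_BsS scalemx_sub // ech_sub.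
Qed.

Lemma Cm_sub (S : 'M[C]_n) : (S *m B <= S)%MS -> (x <= S)%MS -> (Cm <= S)%MS.
Proof.
move=> SB xS; apply/row_subP => i; rewrite rowK.
exact: vstab_pow.
Qed.

Lemma Cm_orth (v : 'rV[C]_n) :
  (v *m adj Cm == 0) = [forall i : 'I_mu.+1, v *m adj (ech i) == 0].
Proof. by rewrite adj_row0; apply: eq_forallb => i; rewrite rowK. Qed.

Lemma Cm_orth_all (v : 'rV[C]_n) : v *m adj Cm = 0 -> forall k, v *m adj (ech k) = 0.
Proof.
move=> /eqP; rewrite Cm_orth => /forallP H k.
case: (ltnP mu k) => [/ech_big -> | hk]; first by rewrite adj0 mulmx0.
by have := H (inord k); rewrite inordK // => /eqP.
Qed.

End Single.

Section Pair.
Variables (C : numClosedFieldType) (n : nat) (B B' : 'M[C]_n).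
Hypothesis HMB : B *m adj B *m B = B *m (B *m adj B) + B.
Hypothesis HMB' : B' *m adj B' *m B' = B' *m (B' *m adj B') + B'.
Variables (mu : nat) (x x' : 'rV[C]_n).
Hypothesis hxM : x *m (B *m adj B) = mu%:R *: x.
Hypothesis hxx : x *m adj x = 1%:M.
Hypothesis hxN : x *m B ^+ mu.+1 = 0.
Hypothesis hxM' : x' *m (B' *m adj B') = mu%:R *: x'.
Hypothesis hxx' : x' *m adj x' = 1%:M.
Hypothesis hxN' : x' *m B' ^+ mu.+1 = 0.

Local Notation e := (ech B x).
Local Notation e' := (ech B' x').

Definition UC := \sum_(i < mu.+1) ((mu ^_ i)%:R^-1) *: (adj (e i) *m e' i).

Lemma UC_apply (v : 'rV[C]_n) :
  v *m UC = \sum_(i < mu.+1) ((mu ^_ i)%:R^-1) *: ((v *m adj (e i)) *m e' i).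
Proof.
rewrite /UC mulmx_sumr; apply: eq_bigr => i _.
by rewrite -scalemxAr mulmxA.
Qed.

Lemma UC_e k : e k *m UC = e' k.
Proof.
case: (ltnP mu k) => [lt | hk].
  by rewrite (ech_big hxN lt) (ech_big hxN' lt) mul0mx.
rewrite UC_apply (bigD1 (inord k)) //= big1 ?addr0.
  rewrite (ech_gram HMB hxM hxx hxN) inordK // eqxx -scalemxAl mul1mx scalerA.
  by rewrite mulVf ?scale1r // pnatr_eq0 -lt0n ffact_gt0.
move=> i /negbTE ik; rewrite (ech_gram HMB hxM hxx hxN).
have ki : (k == i) = false by apply: contraFF ik => /eqP ->; rewrite inord_val.
by rewrite ki scale0r mul0mx scaler0.
Qed.

Lemma UC_orth (v : 'rV[C]_n) : v *m adj (Cm B mu x) = 0 -> v *m UC = 0.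
Proof.
move=> H; rewrite UC_apply big1 // => i _.
by rewrite (Cm_orth_all hxN H) mul0mx scaler0.
Qed.

Lemma UC_sub m (v : 'M[C]_(m, n)) : (v *m UC <= Cm B' mu x')%MS.
Proof.
rewrite /UC mulmx_sumr summx_sub // => i _.
by rewrite -scalemxAr scalemx_sub // mulmxA (submx_trans (submxMl _ _)) // ech_sub.
Qed.

Lemma CmUC : Cm B mu x *m UC = Cm B' mu x'.
Proof. by apply/row_matrixP => i; rewrite row_mul !rowK UC_e. Qed.

Lemma Cm_gram_eq : Cm B mu x *m adj (Cm B mu x) = Cm B' mu x' *m adj (Cm B' mu x').
Proof.
apply/matrixP => i j; rewrite adj_entry [RHS]adj_entry !rowK.
by rewrite (ech_gram HMB hxM hxx hxN) (ech_gram HMB' hxM' hxx' hxN').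
Qed.

Lemma CmUC_pow j : Cm B mu x *m B ^+ j *m UC = Cm B' mu x' *m B' ^+ j.
Proof.
apply/row_matrixP => i; rewrite !row_mul !rowK.
by rewrite echD UC_e echD.
Qed.

Lemma Cm_rank_le j : (\rank (Cm B' mu x' *m B' ^+ j) <= \rank (Cm B mu x *m B ^+ j))%N.
Proof. by rewrite -CmUC_pow mxrankM_maxl. Qed.

Lemma CmUC_B : Cm B mu x *m UC *m B' = Cm B mu x *m B *m UC.
Proof.
apply/row_matrixP => i; rewrite !row_mul !rowK.
by rewrite UC_e echS echS UC_e.
Qed.

End Pair.

Section Perp.
Variables (C : numClosedFieldType) (n : nat).

Lemma perp_zero m p q (Z : 'M[C]_(m,n)) (A : 'M_(p,n)) (D : 'M_(q,n)) :
  (Z <= A)%MS -> (Z <= D)%MS -> A *m adj D = 0 -> Z = 0.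
Proof.
move=> /submxP [Y ->] /submxP [W HZ] AD; apply: mul_adj_eq0.
by rewrite {2}HZ adjM mulmxA -(mulmxA Y) AD mulmx0 mul0mx.
Qed.

Lemma perp_subl m p q (Z : 'M[C]_(m,n)) (A : 'M_(p,n)) (D : 'M_(q,n)) :
  (Z <= A)%MS -> A *m adj D = 0 -> Z *m adj D = 0.
Proof. by move=> /submxP [Y ->] AD; rewrite -mulmxA AD mulmx0. Qed.

Lemma perp_subr m p q (Z : 'M[C]_(m,n)) (A : 'M_(p,n)) (D : 'M_(q,n)) :
  (Z <= D)%MS -> A *m adj D = 0 -> A *m adj Z = 0.
Proof. by move=> /submxP [Y ->] AD; rewrite adjM mulmxA AD mul0mx. Qed.

Lemma perp_sym m p (A : 'M[C]_(m,n)) (D : 'M_(p,n)) :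
  A *m adj D = 0 -> D *m adj A = 0.
Proof. by move=> AD; have := congr1 (@adj _ _ _) AD; rewrite adjM adjK adj0. Qed.

Lemma perp_stab p (Cx : 'M[C]_(p,n)) (S X : 'M[C]_n) :
  (S *m X <= S)%MS -> (Cx *m adj X <= Cx)%MS ->
  ((S :&: kermx (adj Cx)) *m X <= S :&: kermx (adj Cx))%MS.
Proof.
move=> SX /submxP [Y HY]; rewrite sub_capmx; apply/andP; split.
  exact: submx_trans (submxMr _ (capmxSl _ _)) SX.
rewrite sub_kermx; apply/eqP.
have E : X *m adj Cx = adj Cx *m adj Y by have := congr1 (@adj _ _ _) HY; rewrite !adjM adjK.
rewrite -mulmxA E mulmxA.
have /eqP -> : (S :&: kermx (adj Cx))%MS *m adj Cx == 0 by rewrite -sub_kermx capmxSr.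
by rewrite mul0mx.
Qed.

Lemma rank_adj m p (A : 'M[C]_(m,p)) : \rank (adj A) = \rank A.
Proof. by rewrite /adj mxrank_tr (mxrank_map Num.conj). Qed.

Lemma stab_pow_gen p (S : 'M[C]_(p,n)) (X : 'M[C]_n) :
  (S *m X <= S)%MS -> forall j, (S *m X ^+ j <= S)%MS.
Proof.
move=> SX; elim=> [|j IH]; first by rewrite expr0 mulmx1.
by rewrite exprSmx mulmxA (submx_trans (submxMr _ IH)).
Qed.

Lemma find_mu (P : nat -> bool) N : P 0 -> ~~ P N -> exists m, P m && ~~ P m.+1.
Proof.
move=> P0; elim: N => [|N IH] PN; first by rewrite P0 in PN.
case PN' : (P N); first by exists N; rewrite PN' PN.
by apply: IH; rewrite PN'.
Qed.

End Perp.

Lemma nat_aux a b c d m : (a + b = c + (m - d))%N -> (a <= m)%N -> (d <= m)%N ->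
  (b + d <= c)%N -> (b + d == c)%N.
Proof. move=> *; apply/eqP; lia. Qed.

Lemma nat_aux2 a b r : (a != 0)%N -> r = (b + a)%N -> (b < r)%N.
Proof. move=> *; lia. Qed.

Section Main.
Variables (C : numClosedFieldType) (n : nat) (B B' : 'M[C]_n).
Hypothesis HMB : B *m adj B *m B = B *m (B *m adj B) + B.
Hypothesis HMB' : B' *m adj B' *m B' = B' *m (B' *m adj B') + B'.
Variable N : nat.
Hypothesis HN : B ^+ N = 0.

Definition good (S S' U : 'M[C]_n) : Prop :=
  [/\ forall v : 'rV_n, (v <= S)%MS -> v *m U *m B' = v *m B *m U,
      forall u v : 'rV_n, (u <= S)%MS -> (v <= S)%MS ->
         (u *m U) *m adj (v *m U) = u *m adj v,
      forall v : 'rV_n, v *m adj S = 0 -> v *m U = 0 &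
      forall v : 'rV_n, (v <= S)%MS -> (v *m U <= S')%MS].

Lemma main_ind r : forall S S' : 'M[C]_n, \rank S = r ->
  (S *m B <= S)%MS -> (S *m adj B <= S)%MS ->
  (S' *m B' <= S')%MS -> (S' *m adj B' <= S')%MS ->
  (forall j, \rank (S *m B ^+ j) = \rank (S' *m B' ^+ j)) ->
  exists U, good S S' U.
Proof.
elim/ltn_ind: r => r IH S S' rS SB SBs SB' SBs' Hr.
have r0 := Hr 0; rewrite !expr0 !mulmx1 in r0.
case: (eqVneq S 0) => [S0 | Sn0].
  have S'0 : S' = 0 by apply/eqP; rewrite -mxrank_eq0 -r0 S0 mxrank0.
  exists 0; split.
  - by move=> v _; rewrite !mulmx0 mul0mx.
  - move=> u v; rewrite S0 !submx0 => /eqP -> /eqP ->.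
    by rewrite !mul0mx.
  - by move=> v _; rewrite mulmx0.
  - by move=> v _; rewrite mulmx0 sub0mx.
have [mu /andP [Hne H0n]] : exists mu, (S *m B ^+ mu != 0) && ~~ (S *m B ^+ mu.+1 != 0).
  apply: (find_mu (N:=N)); first by rewrite expr0 mulmx1.
  by rewrite HN mulmx0 eqxx.
have H0 : S *m B ^+ mu.+1 = 0 by apply/eqP; rewrite -[_ == _]negbK.
have Hne' : S' *m B' ^+ mu != 0 by rewrite -mxrank_eq0 -Hr mxrank_eq0.
have H0' : S' *m B' ^+ mu.+1 = 0 by apply/eqP; rewrite -mxrank_eq0 -Hr mxrank_eq0 H0.
have [x [xS xM xB xx]] := chain_top HMB SB SBs Hne H0.
have [x' [xS' xM' xB' xx']] := chain_top HMB' SB' SBs' Hne' H0'.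
have xN : x *m B ^+ mu.+1 = 0 := sub_null xS H0.
have xN' : x' *m B' ^+ mu.+1 = 0 := sub_null xS' H0'.
set Cx := Cm B mu x; set Cx' := Cm B' mu x'.
set S1 := (S :&: kermx (adj Cx))%MS; set S1' := (S' :&: kermx (adj Cx'))%MS.
have S1S : (S1 <= S)%MS := capmxSl _ _.
have S1S' : (S1' <= S')%MS := capmxSl _ _.
have S1perp : S1 *m adj Cx = 0 by apply/eqP; rewrite -sub_kermx capmxSr.
have S1perp' : S1' *m adj Cx' = 0 by apply/eqP; rewrite -sub_kermx capmxSr.
have CxS : (Cx <= S)%MS := Cm_sub mu SB xS.
have CxS' : (Cx' <= S')%MS := Cm_sub mu SB' xS'.
have CxB : (Cx *m B <= Cx)%MS := CmB xN.
have CxB' : (Cx' *m B' <= Cx')%MS := CmB xN'.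
have CxBs : (Cx *m adj B <= Cx)%MS := CmBs HMB xM xB xN.
have CxBs' : (Cx' *m adj B' <= Cx')%MS := CmBs HMB' xM' xB' xN'.
have S1B : (S1 *m B <= S1)%MS := perp_stab SB CxBs.
have S1B' : (S1' *m B' <= S1')%MS := perp_stab SB' CxBs'.
have S1Bs : (S1 *m adj B <= S1)%MS by apply: perp_stab SBs _; rewrite adjK.
have S1Bs' : (S1' *m adj B' <= S1')%MS by apply: perp_stab SBs' _; rewrite adjK.
have rCx : forall (B0 : 'M[C]_n) x0, x0 *m adj x0 = 1%:M -> \rank (Cm B0 mu x0) != 0%N.
  move=> B0 x0 h; rewrite mxrank_eq0; apply/eqP => C0.
  have : x0 = row 0 (Cm B0 mu x0) by rewrite rowK ech0.
  rewrite C0 row0 => x00; move: h; rewrite x00 mul0mx => /matrixP/(_ 0 0).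
  by rewrite !mxE /= => /eqP; rewrite eq_sym oner_eq0.
have dsum : forall (S0 S2 D : 'M[C]_n) (p : nat) (Cy : 'M[C]_(p, n)),
    S2 = (S0 :&: kermx (adj Cy))%MS -> (Cy <= S0)%MS -> S2 *m adj Cy = 0 ->
    (S0 :=: S2 + Cy)%MS.
  move=> S0 S2 D p Cy -> CS perp.
  have sub : ((S0 :&: kermx (adj Cy)) + Cy <= S0)%MS by rewrite addsmx_sub capmxSl CS.
  apply/eqmx_sym/eqmxP; rewrite -(mxrank_leqif_eq sub).
  rewrite mxrank_disjoint_sum; last first.
    by apply: (perp_zero (capmxSl _ _) (capmxSr _ _) perp).
  have := mxrank_sum_cap S0 (kermx (adj Cy)).
  rewrite mxrank_ker rank_adj.
  have h1 := rank_leq_col (S0 + kermx (adj Cy))%MS.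
  have h2 := rank_leq_col Cy.
  have h5 := mxrankS sub.
  rewrite mxrank_disjoint_sum in h5; last first.
    by apply: (perp_zero (capmxSl _ _) (capmxSr _ _) perp).
  move=> h; exact: nat_aux h h1 h2 h5.
have Sdec : (S :=: S1 + Cx)%MS := dsum S S1 S _ Cx erefl CxS S1perp.
have Sdec' : (S' :=: S1' + Cx')%MS := dsum S' S1' S _ Cx' erefl CxS' S1perp'.
have Hrk : forall j, \rank (S *m B ^+ j) = (\rank (S1 *m B ^+ j) + \rank (Cx *m B ^+ j))%N.
  move=> j; rewrite (eqmxMr _ Sdec) addsmxMr mxrank_disjoint_sum //.
  apply: (perp_zero _ _ S1perp).
    exact: submx_trans (capmxSl _ _) (stab_pow S1B j).
  exact: submx_trans (capmxSr _ _) (stab_pow_gen CxB j).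
have Hrk' : forall j, \rank (S' *m B' ^+ j) = (\rank (S1' *m B' ^+ j) + \rank (Cx' *m B' ^+ j))%N.
  move=> j; rewrite (eqmxMr _ Sdec') addsmxMr mxrank_disjoint_sum //.
  apply: (perp_zero _ _ S1perp').
    exact: submx_trans (capmxSl _ _) (stab_pow S1B' j).
  exact: submx_trans (capmxSr _ _) (stab_pow_gen CxB' j).
have HrC : forall j, \rank (Cx *m B ^+ j) = \rank (Cx' *m B' ^+ j).
  move=> j; apply/eqP; rewrite eqn_leq.
  by rewrite (Cm_rank_le HMB xM xx xN xN') (Cm_rank_le HMB' xM' xx' xN' xN).
have Hr1 : forall j, \rank (S1 *m B ^+ j) = \rank (S1' *m B' ^+ j).
  by move=> j; apply/eqP; rewrite -(eqn_add2r (\rank (Cx *m B ^+ j))) -Hrk HrC -Hrk' Hr.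
have rlt : (\rank S1 < r)%N.
  have := Hrk 0; rewrite !expr0 !mulmx1 rS.
  have := rCx B x xx; rewrite -/Cx; exact: nat_aux2.
have [U1 [G1 G2 G3 G4]] := IH _ rlt S1 S1' erefl S1B S1Bs S1B' S1Bs' Hr1.
set UCx := UC B B' mu x x'.
have dec : forall v : 'rV_n, (v <= S)%MS ->
    exists a c : 'rV_n, [/\ v = a + c, (a <= S1)%MS & (c <= Cx)%MS].
  move=> v; rewrite Sdec => /sub_addsmxP [[a c] /= ->].
  by exists (a *m S1), (c *m Cx); split; rewrite ?submxMl.
have aUC : forall a : 'rV_n, (a <= S1)%MS -> a *m UCx = 0.
  by move=> a aS; apply: (UC_orth _ _ xN); exact: perp_subl aS S1perp.
have cU1 : forall c : 'rV_n, (c <= Cx)%MS -> c *m U1 = 0.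
  by move=> c cC; apply: G3; exact: perp_subl cC (perp_sym S1perp).
have vU : forall a c : 'rV_n, (a <= S1)%MS -> (c <= Cx)%MS ->
    (a + c) *m (U1 + UCx) = a *m U1 + c *m UCx.
  by move=> a c aS cC; rewrite mulmxDl !mulmxDr (aUC a aS) (cU1 c cC) addr0 add0r.
have cUB : forall c : 'rV_n, (c <= Cx)%MS -> c *m UCx *m B' = c *m B *m UCx.
  move=> c /submxP [W ->].
  by rewrite -(mulmxA W Cx) -(mulmxA W (Cx *m UCx)) (CmUC_B HMB xM xx xN xN') !mulmxA.
have cgram : forall c d : 'rV_n, (c <= Cx)%MS -> (d <= Cx)%MS ->
    (c *m UCx) *m adj (d *m UCx) = c *m adj d.
  move=> c d /submxP [W ->] /submxP [W' ->].
  rewrite -!(mulmxA _ Cx) (CmUC HMB xM xx xN xN') !adjM !mulmxA.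
  rewrite -(mulmxA W Cx') -(mulmxA W Cx).
  by rewrite (Cm_gram_eq HMB HMB' xM xx xN xM' xx' xN').
exists (U1 + UCx); split.
- move=> v /dec [a [c [-> aS cC]]].
  rewrite vU // [LHS]mulmxDl G1 // cUB // !mulmxDl !mulmxDr.
  rewrite (aUC _ (submx_trans (submxMr _ aS) S1B)).
  by rewrite (cU1 _ (submx_trans (submxMr _ cC) CxB)) addr0 add0r.
- move=> u v /dec [a [c [-> aS cC]]] /dec [b [d [-> bS dC]]].
  rewrite !vU // !adjD !mulmxDl !mulmxDr G2 // cgram //.
  have p1 : (a *m U1) *m adj (d *m UCx) = 0.
    apply: perp_subl (G4 _ aS) _; apply: perp_subr S1perp'.
    exact: (@UC_sub _ _ B B' mu x x' xN' _ _).
  have p2 : (a *m adj d) = 0 by apply: perp_subl aS (perp_subr dC S1perp).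
  have p3 : forall (b c : 'rV_n), (b <= S1)%MS -> (c <= Cx)%MS -> (c *m UCx) *m adj (b *m U1) = 0.
    move=> b0 c0 bS0 _; apply: perp_sym; apply: perp_subl (G4 _ bS0) _.
    apply: perp_subr S1perp'; exact: (@UC_sub _ _ B B' mu x x' xN' _ _).
  have p4 : (c *m adj b) = 0 by apply: perp_sym; apply: perp_subl bS (perp_subr cC S1perp).
  by rewrite p1 p2 (p3 b c) // p4 !addr0 add0r.
- move=> v vp; rewrite mulmxDr (G3 _ (perp_subr S1S vp)).
  by rewrite (UC_orth _ _ xN (perp_subr CxS vp)) addr0.
- move=> v /dec [a [c [-> aS cC]]]; rewrite vU //.
  apply: addmx_sub; first exact: submx_trans (G4 _ aS) S1S'.
  exact: submx_trans (@UC_sub _ _ B B' mu x x' xN' _ _) CxS'.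
Qed.

End Main.

Lemma conj_pow (F : comUnitRingType) m (h A : 'M[F]_m) : h \in unitmx -> forall j,
  (h *m A *m invmx h) ^+ j = h *m A ^+ j *m invmx h.
Proof.
move=> hU; elim=> [|j IH]; first by rewrite !expr0 mulmx1 mulmxV.
rewrite exprSr IH -!mulmxE exprSr -mulmxE.
by rewrite !mulmxA -(mulmxA _ (invmx h) h) mulVmx // mulmx1.
Qed.

Theorem proposition5p8 (R : rcfType) (n k : nat) (B B' h : 'M[R[i]]_n) :
  (1 <= k)%N ->
  B *m mxcomm B (conjtr B) = - B ->
  B ^+ k != 0 ->
  B ^+ k.+1 = 0 ->
  h \in unitmx ->
  B' = h *m B *m invmx h ->
  B' *m mxcomm B' (conjtr B') = - B' ->
  exists U : 'M[R[i]]_n, unitary U /\ B' = U *m B *m invmx U.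
Proof.
move=> _ E _ HN hU hB' E'.
have conv : forall A : 'M[R[i]]_n, A *m mxcomm A (conjtr A) = - A ->
    A *m adj A *m A = A *m (A *m adj A) + A.
  move=> A HA; rewrite /mxcomm /conjtr -/(adj A) mulmxBr !mulmxA in HA.
  by rewrite mulmxA -[X in _ + X]opprK -HA opprB addrC subrK.
have HMB := conv _ E; have HMB' := conv _ E'.
have Hr : forall j, \rank (1%:M *m B ^+ j) = \rank (1%:M *m B' ^+ j).
  move=> j; rewrite !mul1mx hB' conj_pow // mxrankMfree ?row_free_unit ?unitmx_inv //.
  apply/eqP; rewrite eqn_leq mxrankM_maxr /=.
  have E1 : B ^+ j = invmx h *m (h *m B ^+ j) by rewrite mulmxA mulVmx // mul1mx.
  by rewrite [X in (\rank X <= _)%N]E1 mxrankM_maxr.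
have [U [G1 G2 _ _]] := main_ind HMB HMB' HN erefl (submx1 _) (submx1 _) (submx1 _) (submx1 _) Hr.
have UB : U *m B' = B *m U.
  apply/row_matrixP => i; have := G1 (row i 1%:M) (submx1 _).
  by rewrite -!row_mul !mul1mx.
have UU : U *m adj U = 1%:M.
  apply/matrixP => i j; rewrite adj_entry.
  have := G2 (row i 1%:M) (row j 1%:M) (submx1 _) (submx1 _).
  rewrite -!row_mul !mul1mx => ->.
  by rewrite !mxE conjC_nat eq_sym.
have UU' : adj U *m U = 1%:M := mulmx1C UU.
have U0U : adj U \in unitmx by have [] := mulmx1_unit UU'.
have invU0 : invmx (adj U) = U.
  by rewrite -[invmx _]mulmx1 -UU' mulmxA mulVmx // mul1mx.
exists (adj U); split.
  by rewrite /unitary /conjtr -/(adj (adj U)) adjK.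
rewrite invU0 -mulmxA -UB mulmxA UU' mul1mx //.
Qed.
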